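(* Let $K=K(p,q)$ be a 2-bridge knot with $e_i,\sigma,C,D,W,W_*$ as in the context, let $n\in\mathbb{Z}$ and $N=n-2\sigma$. Let $t\in\mathbb{C}\setminus\{0\}$ with $t\neq\pm1$ and $u\in\mathbb{C}$ with $(t-t^{-1})^2\neq u$, and write $W=\begin{pmatrix}a&b\\c&d\end{pmatrix}$. Then $C^NW_*W=\mathrm{Id}$ and $WC=DW$ hold if and only if $a=(t-t^{-1})b$ and $t^N\big((t-t^{-1})^2-u\big)b^2=1$.
   Context: $K(p,q)$ denotes the 2-bridge knot with $p,q$ odd integers, $q\in(-p,p)$. For $1\le i\le p-1$ let $e_i=(-1)^{\lfloor iq/p\rfloor}$ and $\sigma=\sum_{i=1}^{p-1}e_i$. For $t\in\mathbb{C}\setminus\{0\}$, $u\in\mathbb{C}$ let $C=\begin{pmatrix}t&1\\0&t^{-1}\end{pmatrix}$, $D=\begin{pmatrix}t&0\\-u&t^{-1}\end{pmatrix}$, $W=C^{e_1}D^{e_2}\cdots C^{e_{p-2}}D^{e_{p-1}}$ and $W_*=D^{e_1}C^{e_2}\cdots D^{e_{p-2}}C^{e_{p-1}}$. *)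

(* Defs.v *)
From mathcomp Require Import all_boot all_algebra complex.
From mathcomp Require Import reals.
Set Implicit Arguments. Unset Strict Implicit. Unset Printing Implicit Defensive.
Import GRing.Theory Num.Theory.
Local Open Scope ring_scope.

Section TwoBridge.
Variable R : realType.
Notation CC := (R[i]).

(* e_i = (-1)^{floor(i q / p)}; intdiv's %/ is floor division for p > 0 *)
Definition esign (p : nat) (q : int) (i : nat) : int :=
  (-1) ^+ `|((i%:Z * q) %/ p%:Z)%Z|%N.

Definition sigma (p : nat) (q : int) : int :=
  \sum_(1 <= i < p) esign p q i.

Definition Cmat (t : CC) : 'M[CC]_2 :=
  \matrix_(i < 2, j < 2)
    (if (i == 0) && (j == 0) then t
     else if (i == 0) && (j == 1) then 1
     else if (i == 1) && (j == 1) then t^-1 else 0).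

Definition Dmat (t u : CC) : 'M[CC]_2 :=
  \matrix_(i < 2, j < 2)
    (if (i == 0) && (j == 0) then t
     else if (i == 1) && (j == 0) then - u
     else if (i == 1) && (j == 1) then t^-1 else 0).

Definition Wmat (p : nat) (q : int) (t u : CC) : 'M[CC]_2 :=
  \prod_(1 <= i < p) (if odd i then Cmat t else Dmat t u) ^ esign p q i.

Definition Wstar (p : nat) (q : int) (t u : CC) : 'M[CC]_2 :=
  \prod_(1 <= i < p) (if odd i then Dmat t u else Cmat t) ^ esign p q i.
End TwoBridge.

(* Main.v *)
Require Import Defs.
From mathcomp Require Import all_boot all_algebra complex.
From mathcomp Require Import reals.
From mathcomp Require Import ring lra zify.
Import GRing.Theory Num.Theory.
Local Open Scope ring_scope.

Section Helpers.
Variable K : comUnitRingType.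

Lemma ord2_cases (k : 'I_2) : k = 0 \/ k = 1.
Proof.
case: k => [[|[|//]] Hk]; [left|right]; exact: val_inj.
Qed.

Lemma mx2_eq (A B : 'M[K]_2) : A 0 0 = B 0 0 -> A 0 1 = B 0 1 ->
  A 1 0 = B 1 0 -> A 1 1 = B 1 1 -> A = B.
Proof.
move=> h00 h01 h10 h11; apply/matrixP => i j.
by case: (ord2_cases i) => ->; case: (ord2_cases j) => ->.
Qed.

Lemma mul2E (A B : 'M[K]_2) i j : (A * B) i j = A i 0 * B 0 j + A i 1 * B 1 j.
Proof.
rewrite -mulmxE mxE big_ord_recl big_ord1.
by have -> : lift ord0 ord0 = 1 :> 'I_2 by apply: val_inj.
Qed.

Lemma trM (X Y : 'M[K]_2) : (X * Y)^T = Y^T * X^T.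
Proof. by rewrite -!mulmxE trmx_mul. Qed.

Lemma tr1 : (1 : 'M[K]_2)^T = 1.
Proof. exact: trmx1. Qed.

Lemma conj_exprz (A B P : 'M[K]_2) (k : int) : A \is a GRing.unit ->
  B \is a GRing.unit -> A * P = P * B -> A ^ k * P = P * B ^ k.
Proof.
move=> uA uB h.
have hn : forall n, A ^+ n * P = P * B ^+ n.
  elim=> [|n IH]; first by rewrite !expr0 mul1r mulr1.
  by rewrite exprS -mulrA IH mulrA h -mulrA -exprS.
case: k => n; first exact: hn.
change ((A ^+ n.+1)^-1 * P = P * (B ^+ n.+1)^-1).
have uX : A ^+ n.+1 \is a GRing.unit by rewrite unitrX.
have uY : B ^+ n.+1 \is a GRing.unit by rewrite unitrX.
apply: (mulrI uX); rewrite mulrA mulrV // mul1r mulrA hn mulrK //.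
Qed.

Lemma tr_exprz (A B Q : 'M[K]_2) (k : int) : A \is a GRing.unit ->
  B \is a GRing.unit -> A * Q = Q * B^T -> A ^ k * Q = Q * (B ^ k)^T.
Proof.
move=> uA uB h.
have hn : forall n, A ^+ n * Q = Q * (B ^+ n)^T.
  elim=> [|n IH]; first by rewrite !expr0 mul1r tr1 mulr1.
  by rewrite exprS -mulrA IH mulrA h -mulrA -trM -exprSr.
case: k => n; first exact: hn.
change ((A ^+ n.+1)^-1 * Q = Q * ((B ^+ n.+1)^-1)^T).
have uX : A ^+ n.+1 \is a GRing.unit by rewrite unitrX.
have uY : B ^+ n.+1 \is a GRing.unit by rewrite unitrX.
apply: (mulrI uX); rewrite mulrA mulrV // mul1r mulrA hn -mulrA -trM mulVr //.
by rewrite tr1 mulr1.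
Qed.

Lemma conj_prod (r : seq nat) (F G : nat -> 'M[K]_2) P :
  (forall i, F i * P = P * G i) ->
  (\prod_(i <- r) F i) * P = P * \prod_(i <- r) G i.
Proof.
move=> h; elim: r => [|i r IH]; first by rewrite !big_nil mul1r mulr1.
by rewrite !big_cons -mulrA IH mulrA h -mulrA.
Qed.

Lemma tr_prod (r : seq nat) (F G : nat -> 'M[K]_2) Q :
  (forall i, F i * Q = Q * (G i)^T) ->
  (\prod_(i <- r) F i) * Q = Q * (\prod_(i <- rev r) G i)^T.
Proof.
move=> h; elim: r => [|i r IH]; first by rewrite !big_nil mul1r tr1 mulr1.
by rewrite big_cons rev_cons big_rcons -mulrA IH mulrA h -mulrA -trM.
Qed.

Lemma det_exprz (A : 'M[K]_2) (k : int) : \det A = 1 -> \det (A ^ k) = 1.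
Proof.
move=> h.
have hn : forall n, \det (A ^+ n) = 1.
  elim=> [|n IH]; first by rewrite expr0 det1.
  by rewrite exprS -mulmxE det_mulmx IH h mulr1.
have uA : forall n, A ^+ n \is a GRing.unit.
  by move=> n; rewrite unitrX // unitmxE h unitr1.
case: k => n; first exact: hn.
change (\det (invmx (A ^+ n.+1)) = 1).
by rewrite det_inv hn invr1.
Qed.

Lemma det_prod (r : seq nat) (F : nat -> 'M[K]_2) :
  (forall i, \det (F i) = 1) -> \det (\prod_(i <- r) F i) = 1.
Proof.
move=> h; elim: r => [|i r IH]; first by rewrite big_nil det1.
by rewrite big_cons -mulmxE det_mulmx IH h mulr1.
Qed.

Lemma det2 (A : 'M[K]_2) : \det A = A 0 0 * A 1 1 - A 0 1 * A 1 0.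
Proof.
rewrite (expand_det_row A 0) big_ord_recl big_ord1 /cofactor !det_mx11 !mxE /=.
have -> : lift ord0 ord0 = 1 :> 'I_2 by apply: val_inj.
have -> : lift 1 0 = 0 :> 'I_2 by apply: val_inj.
rewrite /bump /= expr0 expr1 !mul1r mulN1r.
by rewrite mulrN.
Qed.
End Helpers.
Lemma esign_sym p q i : odd p -> odd `|q| -> coprime p `|q| -> (0 < i < p)%N ->
  esign p q (p - i) = esign p q i.
Proof.
move=> op oq cop /andP[i0 ip].
rewrite /esign.
have p0 : (0 < p)%N by apply: leq_ltn_trans ip.
set x := (i%:Z * q).
have hx : (x %% p)%Z != 0.
  apply/negP => /eqP/dvdz_mod0P; rewrite dvdzE /x abszM absz_nat Gauss_dvdl //.
  by move/(dvdn_leq i0); rewrite leqNgt ip.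
have pz : (p%:Z != 0) by rewrite eqz_nat -lt0n.
set k := (x %/ p)%Z; set r := (x %% p)%Z.
have hxe : x = k * p + r by exact: divz_eq.
have r0 : 0 <= r by apply: modz_ge0.
have rp : r < p%:Z by rewrite /r; apply: ltz_pmod; rewrite ltz_nat.
have -> : ((p - i)%N%:Z * q) = (q - k - 1) * p + (p%:Z - r).
  have hxe2 : i%:Z * q = k * p + r by exact: hxe.
  rewrite -subzn ?(ltnW ip) // mulrBl hxe2; ring.
rewrite divzMDl // divz_small ?addr0; last first.
  apply/andP; split; first by lia.
  rewrite absz_nat; lia.
rewrite -signr_odd -[in RHS]signr_odd.
have -> : odd (absz (q - k - 1)%R) = odd (absz k) by lia.
done.
Qed.

Lemma rev_iota1 n : rev (iota 1 n) = map (fun i => n.+1 - i)%N (iota 1 n).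
Proof.
elim: n => [//|n IH].
have E : iota 1 n.+1 = rcons (iota 1 n) n.+1.
  by have := iotaD 1 n 1; rewrite addn1 => ->; rewrite cats1 add1n.
rewrite [in LHS]E rev_rcons IH /=.
congr (_ :: _).
rewrite (iotaDl 1 1 n) -map_comp; apply: eq_map => j /=; lia.
Qed.

Section Concrete.
Variable R : realType.
Variables t u : R[i].
Hypothesis t0 : t != 0.

Definition sP := t - t^-1.
Definition Pm : 'M[R[i]]_2 := \matrix_(i < 2, j < 2)
  (if (i == 0) && (j == 0) then sP else if (i == 0) && (j == 1) then 1
   else if (i == 1) && (j == 0) then - u else - sP).
Definition Sm : 'M[R[i]]_2 := \matrix_(i < 2, j < 2)
  (if (i == 0) && (j == 0) then 1 else if (i == 1) && (j == 1) then - u else 0).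

Lemma detC : \det (Cmat t) = 1.
Proof. by rewrite det2 !mxE /= mulfV // mulr0 subr0. Qed.
Lemma detD : \det (Dmat t u) = 1.
Proof. by rewrite det2 !mxE /= mulfV // mul0r subr0. Qed.
Lemma unitC : Cmat t \is a GRing.unit.
Proof. by rewrite unitmxE detC unitr1. Qed.
Lemma unitD : Dmat t u \is a GRing.unit.
Proof. by rewrite unitmxE detD unitr1. Qed.

Lemma CP : Cmat t * Pm = Pm * Dmat t u.
Proof. apply: mx2_eq; rewrite !mul2E !mxE /= /sP; by field. Qed.
Lemma DP : Dmat t u * Pm = Pm * Cmat t.
Proof. apply: mx2_eq; rewrite !mul2E !mxE /= /sP; by field. Qed.
Lemma CS : Cmat t * Sm = Sm * (Dmat t u)^T.
Proof. apply: mx2_eq; rewrite !mul2E !mxE /=; by field. Qed.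
Lemma DS : Dmat t u * Sm = Sm * (Cmat t)^T.
Proof. apply: mx2_eq; rewrite !mul2E !mxE /=; by field. Qed.


Lemma Cpow_nat n : let X := Cmat t ^+ n in
  [/\ X 0 0 = t ^+ n, X 1 0 = 0, X 1 1 = (t ^+ n)^-1 &
      X 0 1 * sP = t ^+ n - (t ^+ n)^-1].
Proof.
elim: n => [|n [h00 h10 h11 h01]] /=.
  by rewrite expr0 !mxE /= invr1 subrr mul0r.
rewrite exprSr !mul2E h00 h10 h11 !mxE /=.
split.
- by rewrite mulr0 addr0 exprSr.
- by rewrite mul0r mulr0 addr0.
- by rewrite mul0r add0r exprSr invfM.
- rewrite mulrDl mulr1 mulrAC h01 /sP exprSr invfM.
  by field; rewrite t0 expf_neq0.
Qed.

Lemma Cpow k : let X := Cmat t ^ k in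
  [/\ X 0 0 = t ^ k, X 1 0 = 0, X 1 1 = (t ^ k)^-1 &
      X 0 1 * sP = t ^ k - (t ^ k)^-1].
Proof.
case: k => n; first exact: Cpow_nat.
rewrite /=.
have [h00 h10 h11 h01] := Cpow_nat n.+1.
set Y := Cmat t ^+ n.+1 in h00 h10 h11 h01 *.
have {}h00 : (Y : 'M[R[i]]_2) 0 0 = t ^+ n.+1 := h00.
have {}h10 : (Y : 'M[R[i]]_2) 1 0 = 0 := h10.
have {}h11 : (Y : 'M[R[i]]_2) 1 1 = (t ^+ n.+1)^-1 := h11.
have {}h01 : (Y : 'M[R[i]]_2) 0 1 * sP = t ^+ n.+1 - (t ^+ n.+1)^-1 := h01.
have tn : t ^+ n.+1 != 0 by rewrite expf_neq0.
set Y' : 'M[R[i]]_2 := \matrix_(i < 2, j < 2)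
  (if (i == 0) && (j == 0) then Y 1 1 else if (i == 0) && (j == 1) then - Y 0 1
   else if (i == 1) && (j == 0) then 0 else Y 0 0).
have hY : Y' * Y = 1.
  apply: mx2_eq; rewrite !mul2E !mxE /= ?h00 ?h10 ?h11.
  - by rewrite mulr0 addr0 mulVf.
  - by rewrite mulNr mulrC addrN.
  - by rewrite mul0r mulr0 addr0.
  - by rewrite mul0r add0r mulfV.
have uY : Y \is a GRing.unit by rewrite /Y unitrX // unitC.
have -> : (Cmat t ^ Negz n) = Y' by rewrite -[RHS]mulr1 -(mulrV uY) mulrA hY mul1r.
change (t ^ Negz n) with ((t ^+ n.+1)^-1).
rewrite !mxE /= h00 h11 invrK; split => //.
rewrite mulNr h01; by rewrite opprB.
Qed.


Lemma WsP p q : Wstar p q t u * Pm = Pm * Wmat p q t u.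
Proof.
apply: conj_prod => i; case: (odd i).
- by apply: conj_exprz; [exact: unitD | exact: unitC | exact: DP].
- by apply: conj_exprz; [exact: unitC | exact: unitD | exact: CP].
Qed.

Lemma detW p q : \det (Wmat p q t u) = 1.
Proof.
apply: det_prod => i; apply: det_exprz; case: (odd i); [exact: detC | exact: detD].
Qed.


Lemma WS p q : odd p -> odd `|q| -> coprime p `|q| ->
  Wmat p q t u * Sm = Sm * (Wmat p q t u)^T.
Proof.
move=> op oq cop.
rewrite {1}/Wmat (@tr_prod _ _ _ (fun i => (if odd i then Dmat t u else Cmat t) ^ esign p q i)); last first.
  move=> i; case: (odd i).
  - by apply: tr_exprz; [exact: unitC | exact: unitD | exact: CS].
  - by apply: tr_exprz; [exact: unitD | exact: unitC | exact: DS].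
suff -> : \prod_(i <- rev (index_iota 1 p))
      (if odd i then Dmat t u else Cmat t) ^ esign p q i = Wmat p q t u by [].
have p0 : (0 < p)%N by rewrite lt0n; apply/eqP => p0; rewrite p0 in op.
have [n En] : exists n, p = n.+1 by exists p.-1; rewrite prednK.
rewrite En in op cop *.
have Ei : index_iota 1 n.+1 = iota 1 n by rewrite /index_iota subSS subn0.
rewrite /Wmat Ei rev_iota1 big_map.
apply: eq_big_seq => i; rewrite mem_iota => /andP[i1 i2].
rewrite add1n in i2.
rewrite (@esign_sym n.+1 q i op oq cop); last by rewrite i1 i2.
have -> : odd (n.+1 - i) = ~~ odd i.
  by rewrite oddB ?(ltnW i2) // op.
by case: (odd i).
Qed.


Lemma PP : Pm * Pm = (sP ^+ 2 - u)%:M.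
Proof. apply: mx2_eq; rewrite !mul2E !mxE /= ?mulr1n ?mulr0n; ring. Qed.

End Concrete.

Lemma eq_lin (F : comUnitRingType) (x y x' y' : F) k :
  x' = y' -> x - y = k * (x' - y') -> x = y.
Proof. by move=> e h; apply/eqP; rewrite -subr_eq0 h e subrr mulr0. Qed.
Arguments eq_lin {F x y x' y'} k _ _.

Theorem mainTheorem5 (R : realType) (p : nat) (q : int) (n : int)
    (t u : R[i]) :
  odd p -> (odd `|q|%N) -> (- (p%:Z) < q) -> (q < p%:Z) ->
  coprime p `|q|%N ->
  t != 0 -> t != 1 -> t != -1 -> (t - t^-1) ^+ 2 != u ->
  let N := n - 2 * sigma p q in
  let W := Wmat p q t u in
  let a := W 0 0 in
  let b := W 0 1 in
  (Cmat t ^ N * Wstar p q t u * W = 1 /\ W * Cmat t = Dmat t u * W)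
  <->
  (a = (t - t^-1) * b /\ t ^ N * ((t - t^-1) ^+ 2 - u) * b ^+ 2 = 1).
Proof.
move=> op oq _ _ cop t0 t1 tm1 zu N W a b.
rewrite /a /b.
have hs : t - t^-1 != 0.
  apply/eqP => h.
  have : (t - 1) * (t + 1) = t * (t - t^-1) by field.
  rewrite h mulr0 => /eqP; rewrite mulf_eq0 subr_eq0 addr_eq0 (negbTE t1) (negbTE tm1).
  done.
have hz : (t - t^-1) ^+ 2 - u != 0 by rewrite subr_eq0.
have hWS : W * Sm R u = Sm R u * W^T := WS R t u t0 p q op oq cop.
have hWsP : Wstar p q t u * Pm R t u = Pm R t u * W := WsP R t u t0 p q.
have hdet : W 0 0 * W 1 1 - W 0 1 * W 1 0 = 1 by rewrite -det2 (detW R t u t0 p q).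
have [x00 x10 x11 x01] := Cpow R t t0 N.
have hM : ((t - t^-1) ^+ 2 - u) *: (Wstar p q t u * W) = (Pm R t u * W) * (Pm R t u * W).
  rewrite scalerAl -mul_mx_scalar -[(t - t^-1) ^+ 2 - u]/(sP R t ^+ 2 - u) -(PP R t u) mulmxE.
  by rewrite !mulrA hWsP.
clearbody N W.
have hc : W 1 0 = - u * W 0 1.
  have := congr1 (fun X : 'M[R[i]]_2 => X 0 1) hWS; rewrite !mul2E !mxE /=.
  move=> e; apply: (eq_lin (-1) e). ring.
set Ws := Wstar p q t u in hWsP hM *.
set M := Ws * W in hM *.
set s := t - t^-1 in hs hz hM *.
set z := s ^+ 2 - u in hz hM *.
have hMe : forall i j, z * M i j = (Pm R t u * W * (Pm R t u * W)) i j.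
  by move=> i j; rewrite -hM [RHS]mxE.
have m00 := hMe 0 0; have m10 := hMe 1 0; have m01 := hMe 0 1; have m11 := hMe 1 1.
rewrite !mul2E !mxE /= /sP -/s in m00 m10 m01 m11.
have ex : forall i j, (Cmat t ^ N * Ws * W) i j =
   (Cmat t ^ N) i 0 * (Ws 0 0 * W 0 j + Ws 0 1 * W 1 j) +
   (Cmat t ^ N) i 1 * (Ws 1 0 * W 0 j + Ws 1 1 * W 1 j).
  by move=> i j; rewrite -mulrA !mul2E.
split.
- move=> [H1 H2].
  have ha : W 0 0 = s * W 0 1.
    have := congr1 (fun X : 'M[R[i]]_2 => X 0 1) H2; rewrite !mul2E !mxE /=.
    by move=> e; apply: (eq_lin 1 e); rewrite /s; ring.
  split => //.
  rewrite ha hc in m00 m10.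
  have e1 := ex 0 0; rewrite H1 mxE /= ha hc x00 in e1.
  have hm10 : Ws 1 0 * (s * W 0 1) + Ws 1 1 * (- u * W 0 1) = 0.
    by apply: (mulfI hz); rewrite mulr0 m10 /z; ring.
  have hm00 : Ws 0 0 * (s * W 0 1) + Ws 0 1 * (- u * W 0 1) = z * W 0 1 ^+ 2.
    by apply: (mulfI hz); rewrite m00 /z; ring.
  rewrite hm10 mulr0 addr0 hm00 in e1.
  by rewrite -mulrA -e1.
- move=> [ha hT].
  have hb : W 0 1 != 0.
    apply/eqP => hb0; move: hT; rewrite hb0 expr0n /= mulr0 => /eqP.
    by rewrite eq_sym oner_eq0.
  have hsb : s * W 0 1 != 0 by rewrite mulf_neq0.
  have hd0 : s * W 0 1 * W 1 1 = 1 - u * W 0 1 ^+ 2.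
    by apply: (eq_lin 1 hdet); rewrite ha hc; ring.
  have hd : W 1 1 = (1 - u * W 0 1 ^+ 2) / (s * W 0 1).
    by rewrite -hd0 [_ * W 1 1]mulrC mulfK.
  have hTv : t ^ N = (z * W 0 1 ^+ 2)^-1.
    have hzb : z * W 0 1 ^+ 2 != 0 by rewrite mulf_neq0 // expf_neq0.
    by apply: (mulIf hzb); rewrite mulVf // mulrA.
  have hX01 : (Cmat t ^ N) 0 1 = (t ^ N - (t ^ N)^-1) / s.
    by rewrite -x01 /sP -/s mulfK.
  rewrite ha hc hd in m00 m10 m01 m11.
  have hm : forall x y : R[i], z * x = y -> x = z^-1 * y.
    by move=> x y <-; rewrite mulKf.
  move/hm: m00 => m00; move/hm: m10 => m10; move/hm: m01 => m01; move/hm: m11 => m11.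
  have side : [&& t != 0, W 0 1 != 0, t * t - 1 != 0
    & (t * t - 1) ^+ 2 + - u * t ^+ 2 != 0].
    have e1 : t * t - 1 = t * s by rewrite /s; field.
    have e2 : (t * t - 1) ^+ 2 + - u * t ^+ 2 = t ^+ 2 * z by rewrite /z /s; field.
    by rewrite t0 hb e2 e1 !mulf_neq0 ?expf_neq0.
  split.
    apply: mx2_eq; rewrite ex !mxE /= ?ha ?hc ?hd ?m00 ?m01 ?m10 ?m11 ?x00 ?x10 ?x11 ?hX01 hTv;
      by rewrite /z /s; field.
  apply: mx2_eq; rewrite !mul2E !mxE /= ?ha ?hc ?hd; rewrite /s; field.
  all: case/and4P: side => _ _ h3 _; rewrite ?t0 ?hb //=; exact: h3.
Qed.
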